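(* Let $W$ be a positive word. Let $S$ be a word in the letters $\sigma_1,\dots,\sigma_{n-1}$ only, of maximal length among such words for which $W\doteq ST$ for some positive word $T$. Suppose also that $W\doteq AV$ where $A$ is a word in the letters $\sigma_1,\dots,\sigma_{n-1}$ only and $V$ is a positive word. Then $S$ is left divisible by $A$, i.e. $S\doteq AU$ for some positive word $U$. Analogously for right division: if $S$ is a word in the $\sigma_i$ of maximal length with $W\doteq TS$ for some positive $T$, and $W\doteq VA$ with $A$ a word in the $\sigma_i$ and $V$ positive, then $S\doteq UA$ for some positive word $U$.
   Context: Fix $n\ge 2$. The positive singular braid monoid $SB_n^+$ is the monoid with generators $\sigma_1,\dots,\sigma_{n-1},x_1,\dots,x_{n-1}$ and relations: $\sigma_i\sigma_j=\sigma_j\sigma_i$ and $x_ix_j=x_jx_i$ if $|i-j|>1$; $x_i\sigma_j=\sigma_jx_i$ if $|i-j|\ne 1$; $\sigma_i\sigma_{i+1}\sigma_i=\sigma_{i+1}\sigma_i\sigma_{i+1}$; $\sigma_i\sigma_{i+1}x_i=x_{i+1}\sigma_i\sigma_{i+1}$; $\sigma_{i+1}\sigma_ix_{i+1}=x_i\sigma_{i+1}\sigma_i$. A positive word is a word in the letters $\sigma_i,x_i$. For positive words, $A\doteq B$ means they represent the same element of $SB_n^+$. *)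

(* Defs.v *)
From mathcomp Require Import all_boot.
Set Implicit Arguments. Unset Strict Implicit. Unset Printing Implicit Defensive.

(* Letters: Sig i = sigma_i, X i = x_i (indices are meant in 1..n-1). *)
Inductive letter : Type := Sig of nat | X of nat.

Definition idx (a : letter) : nat := match a with Sig i => i | X i => i end.
Definition is_sig (a : letter) : bool := if a is Sig _ then true else false.

Definition valid_letter (n : nat) (a : letter) : bool := (1 <= idx a) && (idx a <= n - 1).

Definition positive_word (n : nat) (w : seq letter) : bool := all (valid_letter n) w.

Definition sigma_word (n : nat) (w : seq letter) : bool :=
  all (fun a => valid_letter n a && is_sig a) w.

Definition far (i j : nat) : bool := (i.+1 < j) || (j.+1 < i).
Definition not_adj (i j : nat) : bool := ~~ ((i == j.+1) || (j == i.+1)).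
Definition vi (n i : nat) : bool := (1 <= i) && (i <= n - 1).

Inductive sb_rel (n : nat) : seq letter -> seq letter -> Prop :=
| rel_ss i j : vi n i -> vi n j -> far i j ->
    sb_rel n [:: Sig i; Sig j] [:: Sig j; Sig i]
| rel_xx i j : vi n i -> vi n j -> far i j ->
    sb_rel n [:: X i; X j] [:: X j; X i]
| rel_xs i j : vi n i -> vi n j -> not_adj i j ->
    sb_rel n [:: X i; Sig j] [:: Sig j; X i]
| rel_braid i : vi n i -> vi n i.+1 ->
    sb_rel n [:: Sig i; Sig i.+1; Sig i] [:: Sig i.+1; Sig i; Sig i.+1]
| rel_mix1 i : vi n i -> vi n i.+1 ->
    sb_rel n [:: Sig i; Sig i.+1; X i] [:: X i.+1; Sig i; Sig i.+1]
| rel_mix2 i : vi n i -> vi n i.+1 ->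
    sb_rel n [:: Sig i.+1; Sig i; X i.+1] [:: X i; Sig i.+1; Sig i].

Inductive sb_eq (n : nat) : seq letter -> seq letter -> Prop :=
| sb_refl w : sb_eq n w w
| sb_sym u v : sb_eq n u v -> sb_eq n v u
| sb_trans u v w : sb_eq n u v -> sb_eq n v w -> sb_eq n u w
| sb_step u v l r : sb_rel n l r -> sb_eq n (u ++ l ++ v) (u ++ r ++ v).

(* Main.v *)
Require Import Defs.
From mathcomp Require Import all_boot.
From HB Require Import structures.
From mathcomp Require Import zify.
Set Implicit Arguments. Unset Strict Implicit. Unset Printing Implicit Defensive.

Definition letter_eqb (a b : letter) : bool :=
  match a, b with
  | Sig i, Sig j => i == j
  | X i, X j => i == j
  | _, _ => false
  end.
Lemma letter_eqP : Equality.axiom letter_eqb.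
Proof.
case=> [i|i] [j|j] /=; try (by constructor);
  by apply: (iffP eqP) => [->|[]].
Qed.
HB.instance Definition _ := hasDecEq.Build letter letter_eqP.

Definition adj (i j : nat) : bool := (j == i.+1) || (i == j.+1).

Definition fc (a b : letter) : option (seq letter * seq letter) :=
  if a == b then Some ([::], [::]) else
  match a, b with
  | Sig i, Sig j => if adj i j then Some ([:: Sig j; Sig i], [:: Sig i; Sig j])
                    else Some ([:: Sig j], [:: Sig i])
  | X i, X j => if adj i j then None else Some ([:: X j], [:: X i])
  | Sig i, X j => if adj i j then Some ([:: Sig j; X i], [:: Sig i; Sig j])
                  else Some ([:: X j], [:: Sig i])
  | X i, Sig j => if adj i j then Some ([:: Sig j; Sig i], [:: Sig i; X j])
                  else Some ([:: Sig j], [:: X i])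
  end.

Lemma adjC i j : adj i j = adj j i.
Proof. by rewrite /adj orbC. Qed.

Lemma fc_sym a b p q : fc a b = Some (p, q) -> fc b a = Some (q, p).
Proof.
rewrite /fc eq_sym; case: eqP => [_ [<- <-]//|_].
case: a => i; case: b => j; rewrite adjC; case: (adj j i) => //; by case=> <- <-.
Qed.

Definition step (u v : seq letter) : Prop :=
  exists x y a b p q, fc a b = Some (p, q) /\ u = x ++ (a :: p) ++ y /\ v = x ++ (b :: q) ++ y.

Inductive eqv : seq letter -> seq letter -> Prop :=
| eqv_refl w : eqv w w
| eqv_st u v w : step u v -> eqv v w -> eqv u w.
#[local] Hint Resolve eqv_refl : core.

Lemma step_sym u v : step u v -> step v u.
Proof.
case=> [x [y [a [b [p [q [H [-> ->]]]]]]]].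
by exists x, y, b, a, q, p; split => //; apply: fc_sym.
Qed.

Lemma eqv_trans u v w : eqv u v -> eqv v w -> eqv u w.
Proof. elim=> // u1 v1 w1 s _ IH /IH; exact: eqv_st. Qed.

Lemma eqv_step u v : step u v -> eqv u v.
Proof. move=> s; apply: eqv_st s (eqv_refl _). Qed.

Lemma eqv_sym u v : eqv u v -> eqv v u.
Proof.
elim=> // u1 v1 w1 s _ IH; apply: eqv_trans IH _; exact/eqv_step/step_sym.
Qed.

Lemma step_catl z u v : step u v -> step (z ++ u) (z ++ v).
Proof.
case=> [x [y [a [b [p [q [H [-> ->]]]]]]]].
by exists (z ++ x), y, a, b, p, q; rewrite !catA.
Qed.
Lemma step_catr z u v : step u v -> step (u ++ z) (v ++ z).
Proof.
case=> [x [y [a [b [p [q [H [-> ->]]]]]]]].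
by exists x, (y ++ z), a, b, p, q; rewrite -!catA.
Qed.
Lemma eqv_catl z u v : eqv u v -> eqv (z ++ u) (z ++ v).
Proof. elim=> // u1 v1 w1 s _ IH; apply: eqv_st IH; exact: step_catl. Qed.
Lemma eqv_catr z u v : eqv u v -> eqv (u ++ z) (v ++ z).
Proof. elim=> // u1 v1 w1 s _ IH; apply: eqv_st IH; exact: step_catr. Qed.
Lemma eqv_cat u v u' v' : eqv u v -> eqv u' v' -> eqv (u ++ u') (v ++ v').
Proof.
move=> H1 H2; apply: eqv_trans (eqv_catr _ H1) _; exact: eqv_catl.
Qed.
Lemma eqv_cons a u v : eqv u v -> eqv (a :: u) (a :: v).
Proof. exact: (eqv_catl [:: a]). Qed.

Lemma fc_size a b p q : fc a b = Some (p, q) -> size p = size q.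
Proof.
rewrite /fc; case: eqP => [_ [<- <-]//|_].
case: a => i; case: b => j; case: (adj i j) => //; by case=> <- <-.
Qed.

Lemma step_size u v : step u v -> size u = size v.
Proof.
case=> [x [y [a [b [p [q [H [-> ->]]]]]]]].
by rewrite !size_cat /= (fc_size H).
Qed.
Lemma eqv_size u v : eqv u v -> size u = size v.
Proof. by elim=> // u1 v1 w1 /step_size -> _ ->. Qed.
Inductive Rev : seq letter -> seq letter -> seq letter -> seq letter -> Prop :=
| Rev_nl v : Rev [::] v v [::]
| Rev_nr a u : Rev (a :: u) [::] [::] (a :: u)
| Rev_cons a u b v p q P Q1 R K : fc a b = Some (p, q) -> Rev u p P Q1 ->
    Rev v (q ++ Q1) R K -> Rev (a :: u) (b :: v) (P ++ K) R.

Lemma fc_refl a : fc a a = Some ([::], [::]).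
Proof. by rewrite /fc eqxx. Qed.

Lemma step_fc a b p q z : fc a b = Some (p, q) -> step (a :: p ++ z) (b :: q ++ z).
Proof. by move=> H; exists [::], z, a, b, p, q. Qed.

Lemma Rev_sound u v P Q : Rev u v P Q -> eqv (u ++ P) (v ++ Q).
Proof.
elim=> [v0|a u0|a u0 b v0 p q P0 Q1 R K H _ IH1 _ IH2]; rewrite ?cats0 //.
apply: (@eqv_trans _ (a :: (p ++ Q1) ++ K)).
  by rewrite /= catA; apply/eqv_cons/eqv_catr.
rewrite -catA; apply: eqv_trans (eqv_step (step_fc (Q1 ++ K) H)) _.
by apply: eqv_cons; rewrite catA; apply: eqv_sym.
Qed.

Definition Rel a V b T := exists p q Z, fc a b = Some (p, q) /\ eqv V (p ++ Z) /\ eqv T (q ++ Z).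

Definition cube a b c := forall p1 q1 p2 q2 P Q, fc a c = Some (p1, q1) ->
  fc c b = Some (p2, q2) -> Rev q1 p2 P Q ->
  exists p q K, fc a b = Some (p, q) /\ eqv (p1 ++ P) (p ++ K) /\ eqv (q2 ++ Q) (q ++ K).

Definition Gst m := forall u v X Y, size (u ++ X) = m -> eqv (u ++ X) (v ++ Y) ->
  exists P Q Z, Rev u v P Q /\ eqv X (P ++ Z) /\ eqv Y (Q ++ Z).
Definition Qst m := forall a b V T, size V = m -> eqv (a :: V) (b :: T) -> Rel a V b T.

Lemma G_of m : (forall k, k < m -> Qst k /\ Gst k) -> Gst m.
Proof.
move=> IH [|a u1] v X Y Hs He.
  by exists v, [::], Y; split; [constructor|split].
case: v He => [|b v1] He.
  by exists [::], (a :: u1), X; split; [constructor|split=> //; apply: eqv_sym].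
have Hk : size (u1 ++ X) < m by rewrite -Hs.
have [HQ HG] := IH _ Hk.
have [p [q [Z [Hf [E1 E2]]]]] := HQ a b (u1 ++ X) (v1 ++ Y) erefl He.
have [P [Q1 [Z1 [R1 [E3 E4]]]]] := HG u1 p X Z erefl E1.
have E5 : eqv (v1 ++ Y) ((q ++ Q1) ++ Z1).
  by apply: eqv_trans E2 _; rewrite -catA; apply: eqv_catl.
have Hs2 : size (v1 ++ Y) = size (u1 ++ X).
  by have := eqv_size He; rewrite /= => -[].
have [R [K [Z2 [R2 [E6 E7]]]]] := HG v1 (q ++ Q1) Y Z1 Hs2 E5.
exists (P ++ K), R, Z2; split; first exact: Rev_cons Hf R1 R2.
split=> //; apply: eqv_trans E3 _; rewrite -catA; exact: eqv_catl.
Qed.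

Lemma step_rel a V c U : step (a :: V) (c :: U) -> Rel a V c U.
Proof.
case=> [[|d x] [y [a' [b' [p [q [H [E1 E2]]]]]]]].
  case: E1 => -> ->; case: E2 => -> ->.
  by exists p, q, y.
case: E1 => Ea EV; case: E2 => Ec EU; subst.
exists [::], [::], (x ++ (b' :: q) ++ y); split; first exact: fc_refl.
split=> //; apply: eqv_step; by exists x, y, a', b', p, q.
Qed.

Lemma Rel_trans m a V c U b T : (forall a b c, cube a b c) -> Gst m -> size V = m ->
  Rel a V c U -> Rel c U b T -> Rel a V b T.
Proof.
move=> Hc HG Hs [p1 [q1 [Z1 [F1 [E1 E2]]]]] [p2 [q2 [Z2 [F2 [E3 E4]]]]].
have E5 : eqv (q1 ++ Z1) (p2 ++ Z2) by apply: eqv_trans (eqv_sym E2) E3.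
have Hs' : size (q1 ++ Z1) = m.
  by rewrite -Hs (eqv_size E1) !size_cat (fc_size F1).
have [P [Q [K [HR [E6 E7]]]]] := HG _ _ _ _ Hs' E5.
have [p [q [K' [F [E8 E9]]]]] := Hc a b c _ _ _ _ _ _ F1 F2 HR.
exists p, q, (K' ++ K); split=> //; split.
  apply: eqv_trans E1 _; apply: eqv_trans (eqv_catl _ E6) _.
  by rewrite !catA; apply: eqv_catr.
apply: eqv_trans E4 _; apply: eqv_trans (eqv_catl _ E7) _.
by rewrite !catA; apply: eqv_catr.
Qed.

Lemma Q_of m : (forall a b c, cube a b c) -> Gst m -> Qst m.
Proof.
move=> Hc HG a b V T Hs He.
have : forall w1 w2, eqv w1 w2 -> forall a V b T, w1 = a :: V -> w2 = b :: T ->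
    size V = m -> Rel a V b T.
  move=> w1 w2; elim=> [w|u v w St Ev IH] a0 V0 b0 T0 E1 E2 Hs0.
    rewrite E1 in E2; case: E2 => <- <-.
    by exists [::], [::], V0; split; [exact: fc_refl|split].
  case: v St Ev IH => [|c U] St Ev IH.
    by move/step_size: St; rewrite E1.
  have Hs1 : size U = m by move/step_size: St; rewrite E1 /= => -[<-].
  apply: (Rel_trans Hc HG Hs0 _ (IH c U b0 T0 erefl E2 Hs1)).
  by apply: step_rel; rewrite -E1.
by move=> /(_ _ _ He a V b T erefl erefl Hs).
Qed.

Lemma GQ (Hc : forall a b c, cube a b c) m : Qst m /\ Gst m.
Proof.
elim/ltn_ind: m => m IH.
have HG := G_of IH.
by split=> //; apply: Q_of.
Qed.
Inductive rres := Done of seq letter & seq letter | Fail | NoFuel.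

Fixpoint revf (k : nat) (u v : seq letter) : rres :=
  match k with
  | 0 => NoFuel
  | k'.+1 =>
    match u, v with
    | [::], _ => Done v [::]
    | a :: u', [::] => Done [::] u
    | a :: u', b :: v' =>
      match fc a b with
      | None => Fail
      | Some (p, q) =>
        match revf k' u' p with
        | Done P Q1 =>
          match revf k' v' (q ++ Q1) with
          | Done R K => Done (P ++ K) R
          | r => r
          end
        | r => r
        end
      end
    end
  end.

Lemma Rev_revf u v P Q : Rev u v P Q -> forall k, revf k u v = Done P Q \/ revf k u v = NoFuel.
Proof.
elim=> [v0|a u0|a u0 b v0 p q P0 Q1 R K H _ IH1 _ IH2] [|k] /=; auto.
rewrite H; case: (IH1 k) => ->; auto.
by case: (IH2 k) => ->; auto.
Qed.

Definition alph : seq letter := [seq Sig i | i <- iota 0 7] ++ [seq X i | i <- iota 0 7].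

Definition nbrs (w : seq letter) : seq (seq letter) :=
  flatten [seq (match drop i w with
                | a :: r => flatten [seq (match fc a b with
                                         | Some (p, q) => if take (size p) r == p
                                                          then [:: take i w ++ b :: q ++ drop (size p) r]
                                                          else [::]
                                         | None => [::] end) | b <- alph]
                | [::] => [::] end) | i <- iota 0 (size w)].

Definition clos (k : nat) (s : seq (seq letter)) :=
  iter k (fun s => undup (s ++ flatten (map nbrs s))) s.

Definition cube_b (a b c : letter) : bool :=
  match fc a c, fc c b with
  | Some (p1, q1), Some (p2, q2) =>
    match revf 50 q1 p2 with
    | Done P Q =>
      match fc a b with
      | Some (p, q) =>
        let C2 := clos 6 [:: q2 ++ Q] in
        has (fun u => (take (size p) u == p) && ((q ++ drop (size p) u) \in C2))
            (clos 6 [:: p1 ++ P])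
      | None => false
      end
    | Fail => true
    | NoFuel => false
    end
  | _, _ => true
  end.

Definition cube_check : bool :=
  all (fun a => all (fun b => all (fun c => cube_b a b c) alph) alph) alph.

Lemma cube_check_ok : cube_check = true.
Proof. Time vm_compute. reflexivity. Qed.
Lemma nbrs_sound w u : u \in nbrs w -> step w u.
Proof.
case/flattenP=> s /mapP [i _ ->].
case E: (drop i w) => [|a r] //.
case/flattenP=> s' /mapP [b _ ->].
case F: (fc a b) => [[p q]|] //.
case: ifP => // /eqP Ht; rewrite inE => /eqP ->.
exists (take i w), (drop (size p) r), a, b, p, q; split=> //; split=> //.
by rewrite -{1}(cat_take_drop i w) E /= -{1}(cat_take_drop (size p) r) Ht.
Qed.

Lemma clos_sound k w u : u \in clos k [:: w] -> eqv w u.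
Proof.
elim: k u => [|k IH] u /=; first by rewrite inE => /eqP ->.
rewrite mem_undup mem_cat => /orP [/IH //|].
case/flattenP=> s /mapP [v Hv ->] /nbrs_sound St.
exact: eqv_trans (IH _ Hv) (eqv_step St).
Qed.

Lemma cube_b_sound a b c : cube_b a b c -> cube a b c.
Proof.
rewrite /cube_b => H p1 q1 p2 q2 P Q F1 F2 HR.
rewrite F1 F2 in H.
have := Rev_revf HR 50; case=> E; rewrite E in H => //.
case F: (fc a b) H => [[p q]|] // /hasP [u Hu /andP [/eqP Ht Hm]].
exists p, q, (drop (size p) u); split=> //; split.
  have -> : p ++ drop (size p) u = u by rewrite -{1}Ht cat_take_drop.
  exact: clos_sound Hu.
exact: clos_sound Hm.
Qed.
Definition gl (h : nat -> nat) (a : letter) : letter :=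
  match a with Sig i => Sig (h i) | X i => X (h i) end.
Definition good (h : nat -> nat) (P : pred nat) :=
  forall x y, P x -> P y -> (h x == h y) = (x == y) /\ (h x == (h y).+1) = (x == y.+1).
Definition inX (P : pred nat) (w : seq letter) := all (fun l => P (idx l)) w.

Lemma good_adj h P x y : good h P -> P x -> P y -> adj (h x) (h y) = adj x y.
Proof.
move=> G Hx Hy; rewrite /adj.
by have [_ ->] := G x y Hx Hy; have [_ ->] := G y x Hy Hx.
Qed.

Lemma sig_eqE i j : (Sig i == Sig j) = (i == j). Proof. by []. Qed.
Lemma x_eqE i j : (X i == X j) = (i == j). Proof. by []. Qed.
Lemma sx_eqE i j : (Sig i == X j) = false. Proof. by []. Qed.
Lemma xs_eqE i j : (X i == Sig j) = false. Proof. by []. Qed.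

Lemma gl_eq h P a b : good h P -> P (idx a) -> P (idx b) -> (gl h a == gl h b) = (a == b).
Proof.
move=> G; case: a => i; case: b => j /= Hi Hj;
  rewrite ?sig_eqE ?x_eqE ?sx_eqE ?xs_eqE //; by have [-> _] := G i j Hi Hj.
Qed.

Lemma fc_map h P a b : good h P -> P (idx a) -> P (idx b) ->
  fc (gl h a) (gl h b) = omap (fun pq => (map (gl h) pq.1, map (gl h) pq.2)) (fc a b).
Proof.
move=> G Ha Hb; rewrite /fc (gl_eq G Ha Hb); case: eqP => // _.
by case: a Ha => i Ha; case: b Hb => j Hb /=; rewrite (good_adj G Ha Hb); case: adj.
Qed.

Lemma fc_in (P : pred nat) a b p q : fc a b = Some (p, q) -> P (idx a) -> P (idx b) -> inX P p && inX P q.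
Proof.
rewrite /fc; case: eqP => [_ [<- <-]//|_].
case: a => i; case: b => j; case: adj => //= -[<- <-] /= -> -> //.
Qed.

Lemma fc_in2 (P : pred nat) a b p q : fc a b = Some (p, q) -> P (idx a) -> inX P p -> P (idx b) && inX P q.
Proof.
rewrite /fc; case: eqP => [-> [<- <-] /= Ha _|_]; first by rewrite Ha.
case: a => i; case: b => j; case: adj => //= -[<- <-] /= Ha; rewrite ?Ha /= ?andbT;
  first [by move=> /andP [-> ->] | by move=> -> ].
Qed.
Lemma idx_gl h l : idx (gl h l) = h (idx l).
Proof. by case: l. Qed.

Lemma step_map h P u v : good h P -> inX P u -> step u v ->
  step (map (gl h) u) (map (gl h) v) /\ inX P v.
Proof.
move=> G Hu [x [y [a [b [p [q [F [Eu Ev]]]]]]]].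
move: Hu; rewrite Eu Ev /inX !all_cat /= ?all_cat => /and3P [Hx /andP [Ha Hp] Hy].
have /andP [Hb Hq] := fc_in2 F Ha Hp.
split; last by apply/and3P; split=> //; apply/andP.
exists (map (gl h) x), (map (gl h) y), (gl h a), (gl h b), (map (gl h) p), (map (gl h) q).
rewrite (fc_map G Ha Hb) F; split=> //; split; by rewrite !map_cat /= ?map_cat.

Qed.

Lemma eqv_map h P u v : good h P -> inX P u -> eqv u v ->
  eqv (map (gl h) u) (map (gl h) v) /\ inX P v.
Proof.
move=> G Hu E; elim: E Hu => [w|u1 v1 w1 St _ IH] Hu; first by split.
have [St' Hv] := step_map G Hu St.
have [E' Hw] := IH Hv; split=> //; exact: eqv_st St' E'.
Qed.

Lemma Rev_map h P u v Pp Qq : good h P -> Rev u v Pp Qq -> inX P u -> inX P v ->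
  Rev (map (gl h) u) (map (gl h) v) (map (gl h) Pp) (map (gl h) Qq) /\ inX P Pp /\ inX P Qq.
Proof.
move=> G; elim=> [v0|a u0|a u0 b v0 p q P0 Q1 R K F _ IH1 _ IH2].
- by move=> _ Hv; split; [constructor|].
- by move=> Hu _; split; [constructor|].
move=> /= /andP [Ha Hu] /andP [Hb Hv].
have /andP [Hp Hq] := fc_in F Ha Hb.
have [R1 [HP0 HQ1]] := IH1 Hu Hp.
have Hq1 : inX P (q ++ Q1) by rewrite /inX all_cat; apply/andP.
have [R2 [HR HK]] := IH2 Hv Hq1.
split; last by rewrite /inX all_cat; split=> //; apply/andP.
rewrite map_cat; apply: Rev_cons R1 _; first by rewrite (fc_map G Ha Hb) F.
by rewrite -map_cat.
Qed.

Lemma good_inv h psi (X : seq nat) : good h (fun x => x \in X) -> {in X, forall x, psi (h x) = x} ->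
  good psi (fun y => y \in map h X).
Proof.
move=> G I x' y' /mapP [x Hx ->] /mapP [y Hy ->]; rewrite !I //.
by have [-> ->] := G x y Hx Hy.
Qed.

Lemma map_inX h (X : seq nat) w : inX (fun x => x \in X) w -> inX (fun y => y \in map h X) (map (gl h) w).
Proof.
elim: w => //= l w IH /andP [Hl Hw]; rewrite IH // andbT idx_gl; exact: map_f.
Qed.

Lemma map_id h psi (X : seq nat) w : {in X, forall x, psi (h x) = x} -> inX (fun x => x \in X) w ->
  map (gl psi) (map (gl h) w) = w.
Proof.
move=> I; elim: w => //= l w IH /andP [Hl Hw]; rewrite IH //.
by case: l Hl => i /= Hi; rewrite I.
Qed.

Lemma cube_transfer h psi (X : seq nat) a b c : good h (fun x => x \in X) ->
  {in X, forall x, psi (h x) = x} ->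
  idx a \in X -> idx b \in X -> idx c \in X ->
  cube (gl h a) (gl h b) (gl h c) -> cube a b c.
Proof.
move=> G I Ha Hb Hc Hcube p1 q1 p2 q2 Pp Qq F1 F2 HR.
have /andP [i1 i1'] := fc_in F1 Ha Hc.
have /andP [i2 i2'] := fc_in F2 Hc Hb.
have [HR' [iP iQ]] := Rev_map G HR i1' i2.
have F1' := fc_map G Ha Hc; rewrite F1 /= in F1'.
have F2' := fc_map G Hc Hb; rewrite F2 /= in F2'.
have [p' [q' [K' [F' [E1 E2]]]]] := Hcube _ _ _ _ _ _ F1' F2' HR'.
have Fm := fc_map G Ha Hb; rewrite F' in Fm.
case Fab: (fc a b) Fm => [[p q]|] //= [Ep Eq].
have G' := good_inv G I.
have j1 : inX (fun x => x \in X) (p1 ++ Pp) by rewrite /inX all_cat; apply/andP.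
have j2 : inX (fun x => x \in X) (q2 ++ Qq) by rewrite /inX all_cat; apply/andP.
rewrite -map_cat in E1; rewrite -map_cat in E2.
have [E1' _] := eqv_map G' (map_inX h j1) E1.
have [E2' _] := eqv_map G' (map_inX h j2) E2.
have /andP [ip iq] := fc_in Fab Ha Hb.
exists p, q, (map (gl psi) K'); split=> //; split.
  by move: E1'; rewrite (map_id I j1) !map_cat Ep (map_id I ip).
by move: E2'; rewrite (map_id I j2) !map_cat Eq (map_id I iq).
Qed.
Definition Yl (X : seq nat) := X ++ map S X.
Definition gc (X : seq nat) (x : nat) := count (fun t => t \in Yl X) (iota 0 x).

Lemma gc_add X x d : gc X (x + d) = gc X x + count (fun t => t \in Yl X) (iota x d).
Proof. by rewrite /gc iotaD count_cat add0n. Qed.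

Lemma gc_gap X x y : x \in X -> x < y ->
  (y = x.+1 -> gc X y = (gc X x).+1) /\ (x.+1 < y -> (gc X x).+1 < gc X y).
Proof.
move=> Hx Hxy.
have Hx1 : x \in Yl X by rewrite mem_cat Hx.
have Hx2 : x.+1 \in Yl X by rewrite mem_cat map_f ?orbT.
have Hd : 0 < y - x by rewrite subn_gt0.
rewrite -(subnKC (ltnW Hxy)) gc_add; case: (y - x) Hd => [|[|d]] // _.
  split; first by move=> _ /=; rewrite Hx1 addn1.
  by rewrite addn1 ltnn.
split; first by move=> E; exfalso; lia.
by move=> _ /=; rewrite Hx1 Hx2 /=; lia.
Qed.

Lemma gc_lt_of X x y : x \in X -> x < y -> gc X x < gc X y.
Proof.
move=> Hx Hxy; have [g1 g2] := gc_gap Hx Hxy.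
case: (eqVneq y x.+1) => [e|ne]; first by rewrite g1.
apply: ltn_trans (g2 _); first exact: ltnSn.
by rewrite ltn_neqAle eq_sym ne Hxy.
Qed.

Lemma gc_good X : good (gc X) (fun x => x \in X).
Proof.
move=> x y Hx Hy; case: (ltngtP x y) => [xy|yx|<-].
- have lt := gc_lt_of Hx xy.
  have lt' : gc X x < (gc X y).+1 by rewrite ltnS ltnW.
  have xy' : x < y.+1 by rewrite ltnS ltnW.
  by rewrite (ltn_eqF lt) (ltn_eqF lt') (ltn_eqF xy').
- have lt := gc_lt_of Hy yx.
  rewrite (gtn_eqF lt); split=> //.
  have [g1 g2] := gc_gap Hy yx.
  case: (eqVneq x y.+1) => [e|ne]; first by rewrite g1 // !eqxx.
  have yx' : y.+1 < x by rewrite ltn_neqAle eq_sym ne yx.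
  by rewrite (gtn_eqF (g2 yx')).
- by rewrite !eqxx (ltn_eqF (ltnSn _)) (ltn_eqF (ltnSn _)).
Qed.

Lemma gc_lt7 X x : size X = 3 -> gc X x < 7.
Proof.
move=> HX; rewrite /gc -size_filter.
have U := filter_uniq (fun t => t \in Yl X) (iota_uniq 0 x).
have S : {subset filter (fun t => t \in Yl X) (iota 0 x) <= Yl X}.
  by move=> t; rewrite mem_filter => /andP [].
have := uniq_leq_size U S; rewrite size_cat size_map HX.
by move=> H; apply: leq_ltn_trans H _.
Qed.

Lemma gl_alph h l : h (idx l) < 7 -> gl h l \in alph.
Proof.
case: l => i /= H; rewrite mem_cat; apply/orP; [left|right]; apply: map_f;
  by rewrite mem_iota.
Qed.

Lemma cube_all a b c : cube a b c.
Proof.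
set Xs := [:: idx a; idx b; idx c].
set g := gc Xs.
pose psi t := if t == g (idx a) then idx a else if t == g (idx b) then idx b else idx c.
have G : good g (fun x => x \in Xs) := @gc_good Xs.
have Ha : idx a \in Xs by rewrite !inE eqxx.
have Hb : idx b \in Xs by rewrite !inE eqxx orbT.
have Hc : idx c \in Xs by rewrite !inE eqxx !orbT.
have I : {in Xs, forall x, psi (g x) = x}.
  move=> x Hx; rewrite /psi.
  have [e1 _] := G _ _ Hx Ha; have [e2 _] := G _ _ Hx Hb.
  case: ifP; [by rewrite e1 => /eqP -> | rewrite e1 => na].
  case: ifP; [by rewrite e2 => /eqP -> | rewrite e2 => nb].
  by move: Hx; rewrite !inE na nb /= => /eqP ->.
apply: (cube_transfer G I Ha Hb Hc).
apply: cube_b_sound.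
have := cube_check_ok; rewrite /cube_check.
have L : forall l, gl g l \in alph.
  by move=> l; apply: gl_alph; apply: gc_lt7.
by move/allP/(_ (gl g a) (L a))/allP/(_ (gl g b) (L b))/allP/(_ (gl g c) (L c)).
Qed.
Lemma far_fc i j : far i j -> (i == j) = false /\ adj i j = false.
Proof. rewrite /far /adj => H; split; apply/negbTE; lia. Qed.

Lemma sbrel_fc n l r : sb_rel n l r ->
  exists a b p q, fc a b = Some (p, q) /\ l = a :: p /\ r = b :: q.
Proof.
case=> [i j _ _ H|i j _ _ H|i j _ _ H|i _ _|i _ _|i _ _].
- have [e1 e2] := far_fc H.
  by exists (Sig i), (Sig j), [:: Sig j], [:: Sig i]; rewrite /fc sig_eqE e1 e2.
- have [e1 e2] := far_fc H.
  by exists (X i), (X j), [:: X j], [:: X i]; rewrite /fc x_eqE e1 e2.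
- have e2 : adj i j = false by move: H; rewrite /not_adj /adj; apply: contraNF; lia.
  by exists (X i), (Sig j), [:: Sig j], [:: X i]; rewrite /fc xs_eqE e2.
- have e1 : (i == i.+1) = false by apply/negbTE; lia.
  have e2 : adj i i.+1 by rewrite /adj eqxx.
  by exists (Sig i), (Sig i.+1), [:: Sig i.+1; Sig i], [:: Sig i; Sig i.+1]; rewrite /fc sig_eqE e1 e2.
- have e2 : adj i i.+1 by rewrite /adj eqxx.
  by exists (Sig i), (X i.+1), [:: Sig i.+1; X i], [:: Sig i; Sig i.+1]; rewrite /fc sx_eqE e2.
- have e2 : adj i.+1 i by rewrite /adj eqxx orbT.
  by exists (Sig i.+1), (X i), [:: Sig i; X i.+1], [:: Sig i.+1; Sig i]; rewrite /fc sx_eqE e2.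
Qed.

Lemma sb_eqv n u v : sb_eq n u v -> eqv u v.
Proof.
elim=> [w|u0 v0 _ IH|u0 v0 w0 _ IH1 _ IH2|u0 v0 l r H].
- by [].
- exact: eqv_sym.
- exact: eqv_trans IH1 IH2.
have [a [b [p [q [F [-> ->]]]]]] := sbrel_fc H.
apply: eqv_step; by exists u0, v0, a, b, p, q.
Qed.

Lemma sb_ctx n x y l r : sb_eq n l r -> sb_eq n (x ++ l ++ y) (x ++ r ++ y).
Proof.
elim=> [w|u0 v0 _ IH|u0 v0 w0 _ IH1 _ IH2|u0 v0 l0 r0 H].
- exact: sb_refl.
- exact: sb_sym.
- exact: sb_trans IH1 IH2.
have := sb_step (x ++ u0) (v0 ++ y) H; by rewrite !catA.
Qed.

Lemma rel_sb n l r : sb_rel n l r -> sb_eq n l r.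
Proof. move=> H; have := sb_step [::] [::] H; by rewrite /= !cats0. Qed.

Lemma fc_sb n a b p q : fc a b = Some (p, q) -> positive_word n (a :: p) -> sb_eq n (a :: p) (b :: q).
Proof.
rewrite /fc; case: eqP => [-> [<- <-] _|ne]; first exact: sb_refl.
case: a ne => i; case: b => j ne; case A: (adj i j) => // -[<- <-] H;
  have V := allP H;
  have Hi : vi n i := V _ (mem_head _ _);
  have Hj : vi n j by first [apply: (V (Sig j)); by rewrite !inE eqxx ?orbT
                           | apply: (V (X j)); by rewrite !inE eqxx ?orbT].
- case/orP: A => /eqP E; subst.
    exact: rel_sb (rel_braid Hi Hj).
  exact: sb_sym (rel_sb (rel_braid Hj Hi)).
- apply: rel_sb; apply: rel_ss => //.
  have : i != j by apply/eqP => E; apply: ne; rewrite E.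
  by move: A; rewrite /far /adj; lia.
- case/orP: A => /eqP E; subst.
    exact: rel_sb (rel_mix1 Hi Hj).
  exact: rel_sb (rel_mix2 Hj Hi).
- apply: sb_sym; apply: rel_sb; apply: rel_xs => //.
  by move: A; rewrite /not_adj /adj; lia.
- case/orP: A => /eqP E; subst.
    exact: sb_sym (rel_sb (rel_mix2 Hi Hj)).
  exact: sb_sym (rel_sb (rel_mix1 Hj Hi)).
- apply: rel_sb; apply: rel_xs => //.
  by move: A; rewrite /not_adj /adj; lia.
- apply: rel_sb; apply: rel_xx => //.
  have : i != j by apply/eqP => E; apply: ne; rewrite E.
  by move: A; rewrite /far /adj; lia.
Qed.
Lemma pos_inX n w : positive_word n w = inX (vi n) w.
Proof. by []. Qed.

Lemma eqv_sb n u v : eqv u v -> positive_word n u -> sb_eq n u v /\ positive_word n v.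
Proof.
elim=> [w|u0 v0 w0 St _ IH] Hu; first by split=> //; exact: sb_refl.
case: St => [x [y [a [b [p [q [F [Eu Ev]]]]]]]].
move: Hu; rewrite Eu /positive_word !all_cat => /and3P [Hx Hap' Hy].
have Hv0 : positive_word n v0.
  rewrite Ev /positive_word !all_cat Hx Hy /= andbT.
  move: Hap'; rewrite /= => /andP [Ha Hp].
  exact: (fc_in2 (P := vi n) F Ha Hp).
have [E1 Hw] := IH Hv0; split=> //.
apply: sb_trans E1; rewrite Ev; apply: sb_ctx; exact: fc_sb F Hap'.
Qed.

Lemma Rev_all (L : pred letter) u v P Q :
  (forall a b p q, fc a b = Some (p, q) -> L a -> L b -> all L p && all L q) ->
  Rev u v P Q -> all L u -> all L v -> all L P && all L Q.
Proof.
move=> HL; elim=> [v0|a u0|a u0 b v0 p q P0 Q1 R K F _ IH1 _ IH2] //=.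
  by move=> _ ->.
move=> /andP [Ha Hu] /andP [Hb Hv].
have /andP [Hp Hq] := HL _ _ _ _ F Ha Hb.
have /andP [HP HQ1] := IH1 Hu Hp.
have Hq1 : all L (q ++ Q1) by rewrite all_cat Hq HQ1.
have /andP [HR HK] := IH2 Hv Hq1.
by rewrite all_cat HP HK HR.
Qed.
Lemma fc_sig n a b p q : fc a b = Some (p, q) ->
  (fun l => valid_letter n l && is_sig l) a -> (fun l => valid_letter n l && is_sig l) b ->
  all (fun l => valid_letter n l && is_sig l) p && all (fun l => valid_letter n l && is_sig l) q.
Proof.
rewrite /fc; case: eqP => [_ [<- <-]//|_].
case: a => i; case: b => j; case: adj => //; case=> <- <- /=; rewrite ?andbT ?andbF //;
  by move=> -> ->.
Qed.

Lemma sig_pos n w : sigma_word n w -> positive_word n w.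
Proof. by apply: sub_all => l /andP []. Qed.

Lemma left_div n W S A V :
    positive_word n W -> sigma_word n S ->
    (exists T, positive_word n T /\ sb_eq n W (S ++ T)) ->
    (forall S' T', sigma_word n S' -> positive_word n T' ->
        sb_eq n W (S' ++ T') -> size S' <= size S) ->
    sigma_word n A -> positive_word n V -> sb_eq n W (A ++ V) ->
    exists U, positive_word n U /\ sb_eq n S (A ++ U).
Proof.
move=> HW HS [T [HT E1]] Hmax HA HV E2.
have E : eqv (A ++ V) (S ++ T) := eqv_trans (eqv_sym (sb_eqv E2)) (sb_eqv E1).
have [_ G] := GQ cube_all (size (A ++ V)).
have [P [Q [Z [HR [EV ET]]]]] := G A S V T erefl E.
have /andP [SP SQ] := Rev_all (@fc_sig n) HR HA HS.
have ES := Rev_sound HR.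
have EW : eqv W ((S ++ Q) ++ Z).
  apply: eqv_trans (sb_eqv E2) _; apply: eqv_trans (eqv_catl _ EV) _.
  by rewrite catA; apply: eqv_catr.
have [SW PW] := eqv_sb EW HW.
have PZ : positive_word n Z by move: PW; rewrite /positive_word all_cat => /andP [].
have SSQ : sigma_word n (S ++ Q) by rewrite /sigma_word all_cat; apply/andP.
have := Hmax _ _ SSQ PZ SW; rewrite size_cat -{2}[size S]addn0 leq_add2l leqn0 => /nilP EQ.
rewrite EQ cats0 in ES.
exists P; split; first exact: sig_pos.
exact: (eqv_sb (eqv_sym ES) (sig_pos HS)).1.
Qed.

Lemma sbrel_rev n l r : sb_rel n l r -> sb_eq n (rev l) (rev r).
Proof.
case=> [i j Hi Hj H|i j Hi Hj H|i j Hi Hj H|i Hi Hj|i Hi Hj|i Hi Hj]; rewrite /rev /=.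
- by apply: rel_sb; apply: rel_ss => //; rewrite /far orbC.
- by apply: rel_sb; apply: rel_xx => //; rewrite /far orbC.
- exact: sb_sym (rel_sb (rel_xs Hi Hj H)).
- exact: rel_sb (rel_braid Hi Hj).
- exact: sb_sym (rel_sb (rel_mix2 Hi Hj)).
- exact: sb_sym (rel_sb (rel_mix1 Hi Hj)).
Qed.

Lemma sb_rev n u v : sb_eq n u v -> sb_eq n (rev u) (rev v).
Proof.
elim=> [w|u0 v0 _ IH|u0 v0 w0 _ IH1 _ IH2|u0 v0 l r H].
- exact: sb_refl.
- exact: sb_sym.
- exact: sb_trans IH1 IH2.
rewrite !rev_cat -!catA; exact: sb_ctx (sbrel_rev H).
Qed.

Theorem proposition2p2 (n : nat) (hn : 2 <= n) :
  (* left division *)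
  (forall (W S A V : seq letter),
    positive_word n W -> sigma_word n S ->
    (exists T, positive_word n T /\ sb_eq n W (S ++ T)) ->
    (forall S' T', sigma_word n S' -> positive_word n T' ->
        sb_eq n W (S' ++ T') -> size S' <= size S) ->
    sigma_word n A -> positive_word n V -> sb_eq n W (A ++ V) ->
    exists U, positive_word n U /\ sb_eq n S (A ++ U))
  /\
  (* right division *)
  (forall (W S A V : seq letter),
    positive_word n W -> sigma_word n S ->
    (exists T, positive_word n T /\ sb_eq n W (T ++ S)) ->
    (forall S' T', sigma_word n S' -> positive_word n T' ->
        sb_eq n W (T' ++ S') -> size S' <= size S) ->
    sigma_word n A -> positive_word n V -> sb_eq n W (V ++ A) ->
    exists U, positive_word n U /\ sb_eq n S (U ++ A)).
Proof.
split; first exact: left_div.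
move=> W S A V HW HS [T [HT E1]] Hmax HA HV E2.
have Hr : forall (P : pred letter) w, all P w -> all P (rev w) by move=> P w; rewrite all_rev.
have [U [HU EU]] : exists U, positive_word n U /\ sb_eq n (rev S) (rev A ++ U).
  apply: (@left_div n (rev W) (rev S) (rev A) (rev V)); try exact: Hr.
  - exists (rev T); split; first exact: Hr.
    by have := sb_rev E1; rewrite rev_cat.
  - move=> S' T' H1 H2 H3.
    have := Hmax (rev S') (rev T') (Hr _ _ H1) (Hr _ _ H2).
    rewrite !size_rev; apply; have := sb_rev H3; by rewrite revK rev_cat.
  - by have := sb_rev E2; rewrite rev_cat.
exists (rev U); split; first exact: Hr.
by have := sb_rev EU; rewrite revK rev_cat revK.
Qed.
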